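(* Let $a\in\mathbb{R}$, $w\in\mathbb{C}\setminus\mathbb{R}$ with $\varphi := |\operatorname{Arg}(w)|\in(\pi/2,\pi)$, and $\tau>0$. Then all roots of $z + a - we^{-\tau z} = 0$ have negative real parts if and only if one of the following holds: (i) $a \ge 0$ and $|w| < \frac{1}{\tau}R_2(-\tau a;\varphi)$; (ii) $-\frac{1}{\tau}M(\varphi) < a < 0$ and $\frac{1}{\tau}R_1(-\tau a;\varphi) < |w| < \frac{1}{\tau}R_2(-\tau a;\varphi)$.
   Context: $\operatorname{Arg}(w)\in(-\pi,\pi]$ is the principal argument. For $\varphi\in(\pi/2,\pi)$: $C(\theta;\varphi) := \theta\cot(\theta-\varphi)$ on $[0,\varphi)$; $S(\varphi)\in(0,\varphi)$ is the unique solution of $\sin(2\theta-2\varphi)=2\theta$; $C(\cdot;\varphi)$ is strictly increasing on $[0,S(\varphi)]$ and strictly decreasing on $[S(\varphi),\varphi)$ with maximum $M(\varphi) := \cos^2(S(\varphi)-\varphi)$, $C(0;\varphi)=0$, and $C(\theta;\varphi)\to-\infty$ as $\theta\uparrow\varphi$. $C_1^{-1}(\cdot;\varphi):[0,M(\varphi)]\to[0,S(\varphi)]$ and $C_2^{-1}(\cdot;\varphi):(-\infty,M(\varphi)]\to[S(\varphi),\varphi)$ are the inverses of the restrictions of $C(\cdot;\varphi)$ to $[0,S(\varphi)]$ and $[S(\varphi),\varphi)$. $R_j(r;\varphi) := -C_j^{-1}(r;\varphi)/\sin(C_j^{-1}(r;\varphi)-\varphi)$ for $j=1,2$. *)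

(* Defs.v *)
From Stdlib Require Import Reals Lra ClassicalEpsilon.
From Coquelicot Require Import Coquelicot.
Open Scope R_scope.

Definition Cexp (z : C) : C :=
  (exp (Re z) * cos (Im z), exp (Re z) * sin (Im z)).

Definition Arg (w : C) : R :=
  if Rlt_dec (Im w) 0 then - acos (Re w / Cmod w) else acos (Re w / Cmod w).

(* choice of an element satisfying P (the paper's "the unique ...") *)
Definition choose (P : R -> Prop) : R := epsilon (inhabits 0) P.

Definition Cfun (theta phi : R) : R := theta * cos (theta - phi) / sin (theta - phi).

Definition Sphi (phi : R) : R :=
  choose (fun t => 0 < t < phi /\ sin (2 * t - 2 * phi) = 2 * t).

Definition Mphi (phi : R) : R := (cos (Sphi phi - phi)) ^ 2.

Definition C1inv (r phi : R) : R :=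
  choose (fun t => 0 <= t <= Sphi phi /\ Cfun t phi = r).
Definition C2inv (r phi : R) : R :=
  choose (fun t => Sphi phi <= t < phi /\ Cfun t phi = r).

Definition Rfun1 (r phi : R) : R := - C1inv r phi / sin (C1inv r phi - phi).
Definition Rfun2 (r phi : R) : R := - C2inv r phi / sin (C2inv r phi - phi).

(* Main.v *)
Require Import Defs.
From Stdlib Require Import Reals.
From Coquelicot Require Import Coquelicot.
From Stdlib Require Import Lra Lia ClassicalEpsilon Ranalysis5 Classical.
Open Scope R_scope.

Lemma strict_incr (f f' : R -> R) a b :
  (forall c, a <= c <= b -> derivable_pt_lim f c (f' c)) ->
  (forall c, a < c < b -> 0 < f' c) ->
  forall x y, a <= x -> x < y -> y <= b -> f x < f y.
Proof.
  intros Hd Hp x y Hx Hxy Hy.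
  destruct (MVT_cor2 f f' x y Hxy) as [c [Hc1 Hc2]].
  { intros c Hc; apply Hd; lra. }
  assert (0 < f' c) by (apply Hp; lra).
  assert (0 < f' c * (y - x)) by (apply Rmult_lt_0_compat; lra). lra.
Qed.

Lemma strict_decr (f f' : R -> R) a b :
  (forall c, a <= c <= b -> derivable_pt_lim f c (f' c)) ->
  (forall c, a < c < b -> f' c < 0) ->
  forall x y, a <= x -> x < y -> y <= b -> f y < f x.
Proof.
  intros Hd Hp x y Hx Hxy Hy.
  destruct (MVT_cor2 f f' x y Hxy) as [c [Hc1 Hc2]].
  { intros c Hc; apply Hd; lra. }
  assert (0 < - f' c) by (assert (f' c < 0) by (apply Hp; lra); lra).
  assert (0 < - f' c * (y - x)) by (apply Rmult_lt_0_compat; lra). lra.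
Qed.

Lemma cont_of_deriv f x l : derivable_pt_lim f x l -> continuity_pt f x.
Proof. intro H. apply derivable_continuous_pt. exists l. exact H. Qed.

Lemma IVT_le (f : R -> R) a b y :
  a <= b -> (forall c, a <= c <= b -> continuity_pt f c) ->
  f a <= y -> y <= f b -> exists z, a <= z <= b /\ f z = y.
Proof.
  intros Hab Hc Ha Hb.
  destruct (Req_dec (f a) y) as [E|E]. { exists a; split; [lra|exact E]. }
  destruct (Req_dec (f b) y) as [E'|E']. { exists b; split; [lra|exact E']. }
  assert (Hlt : a < b).
  { destruct (Req_dec a b) as [->|]; [|lra]. exfalso; lra. }
  destruct (IVT_interv (fun x => f x - y) a b) as [z [Hz1 Hz2]]; auto.
  - intros c Hc'. apply continuity_pt_minus; [apply Hc; lra| apply continuity_pt_const; intros u v; reflexivity].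
  - lra.
  - lra.
  - exists z; split; [lra|lra].
Qed.

Definition Ff (p t : R) := sin (2*t - 2*p) - 2*t.

Lemma Ff_deriv p c : derivable_pt_lim (Ff p) c (2*cos(2*c-2*p) - 2).
Proof. apply is_derive_Reals. unfold Ff. auto_derive; auto. unfold Rminus. ring. Qed.

Lemma sinm_neg p t : PI/2 < p < PI -> 0 <= t < p -> sin (t - p) < 0.
Proof. intros Hp Ht. apply sin_lt_0_var; lra. Qed.

Lemma Ff_decr p : PI/2 < p < PI -> forall x y, 0 <= x -> x < y -> y <= p -> Ff p y < Ff p x.
Proof.
  intros Hp. apply (strict_decr (Ff p) (fun c => 2*cos(2*c-2*p) - 2) 0 p).
  - intros c _; apply Ff_deriv.
  - intros c Hc. replace (2*c-2*p) with (2*(c-p)) by ring. rewrite cos_2a_sin.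
    assert (sin (c - p) < 0) by (apply sinm_neg; lra). nra.
Qed.

Lemma Sphi_spec p : PI/2 < p < PI -> 0 < Sphi p < p /\ sin (2 * Sphi p - 2 * p) = 2 * Sphi p.
Proof.
  intros Hp. unfold Sphi, choose. apply epsilon_spec.
  assert (H0 : 0 < Ff p 0).
  { unfold Ff. replace (2*0-2*p) with (-(2*p)) by ring. rewrite sin_neg, sin_2a.
    assert (0 < sin p) by (apply sin_gt_0; lra).
    assert (cos p < 0) by (apply cos_lt_0; lra). nra. }
  assert (H1 : Ff p p < 0).
  { unfold Ff. replace (2*p-2*p) with 0 by ring. rewrite sin_0; lra. }
  destruct (IVT_le (fun t => - Ff p t) 0 p 0) as [z [Hz1 Hz2]]; try lra.
  - intros c _. apply continuity_pt_opp. apply (cont_of_deriv _ _ _ (Ff_deriv p c)).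
  - exists z. assert (Ff p z = 0) by lra.
    assert (z <> 0) by (intro; subst; lra). assert (z <> p) by (intro; subst; lra).
    unfold Ff in *. split; [lra|lra].
Qed.


Definition Cd (p c : R) := (cos (c-p) - c*sin (c-p)) / sin (c-p) - c*cos (c-p)*cos (c-p) / (sin (c-p) * sin (c-p)).

Lemma C_deriv p c : sin (c-p) <> 0 -> derivable_pt_lim (fun t => Cfun t p) c (Cd p c).
Proof.
  intro Hs. apply is_derive_Reals. unfold Cfun, Cd. auto_derive.
  - unfold Rminus in Hs; auto.
  - unfold Rminus. field. unfold Rminus in Hs; auto.
Qed.

Lemma Cd_sign p c : sin (c-p) <> 0 -> Cd p c * (sin (c-p) * sin (c-p)) = Ff p c / 2.
Proof.
  intro Hs. unfold Ff. replace (2*c-2*p) with (2*(c-p)) by ring. rewrite sin_2a.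
  assert (H := sin2_cos2 (c-p)). unfold Rsqr in H.
  assert (E : Cd p c * (sin (c-p) * sin (c-p)) = cos (c - p) * sin (c - p) - c * (sin (c - p) * sin (c-p) + cos (c - p) * cos (c-p))) by (unfold Cd; field; auto).
  rewrite E, H. field.
Qed.

Lemma S_prop p : PI/2 < p < PI -> 0 < Sphi p < p /\ Ff p (Sphi p) = 0.
Proof. intro Hp. destruct (Sphi_spec p Hp) as [H1 H2]. split; auto. unfold Ff; lra. Qed.

Lemma Ff_pos p c : PI/2 < p < PI -> 0 <= c < Sphi p -> 0 < Ff p c.
Proof. intros Hp Hc. destruct (S_prop p Hp) as [H1 H2]. rewrite <- H2.
  apply Ff_decr; lra. Qed.

Lemma Ff_negv p c : PI/2 < p < PI -> Sphi p < c <= p -> Ff p c < 0.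
Proof. intros Hp Hc. destruct (S_prop p Hp) as [H1 H2]. rewrite <- H2.
  apply Ff_decr; lra. Qed.

Lemma Cd_pos p c : PI/2 < p < PI -> 0 <= c < Sphi p -> 0 < Cd p c.
Proof.
  intros Hp Hc. destruct (S_prop p Hp) as [H1 H2].
  assert (Hs : sin (c - p) < 0) by (apply sinm_neg; lra).
  assert (H := Cd_sign p c ltac:(lra)). assert (H3 := Ff_pos p c Hp Hc).
  assert (0 < sin (c-p) * sin (c-p)) by nra. nra.
Qed.

Lemma Cd_neg p c : PI/2 < p < PI -> Sphi p < c < p -> Cd p c < 0.
Proof.
  intros Hp Hc. destruct (S_prop p Hp) as [H1 H2].
  assert (Hs : sin (c - p) < 0) by (apply sinm_neg; lra).
  assert (H := Cd_sign p c ltac:(lra)). assert (H3 := Ff_negv p c Hp ltac:(lra)).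
  assert (0 < sin (c-p) * sin (c-p)) by nra. nra.
Qed.

Lemma C_incr p : PI/2 < p < PI -> forall x y, 0 <= x -> x < y -> y <= Sphi p -> Cfun x p < Cfun y p.
Proof.
  intros Hp. destruct (S_prop p Hp) as [H1 H2].
  apply (strict_incr (fun t => Cfun t p) (Cd p) 0 (Sphi p)).
  - intros c Hc. apply C_deriv. assert (sin (c-p) < 0) by (apply sinm_neg; lra). lra.
  - intros c Hc. apply Cd_pos; lra.
Qed.

Lemma C_decr p : PI/2 < p < PI -> forall x y, Sphi p <= x -> x < y -> y < p -> Cfun y p < Cfun x p.
Proof.
  intros Hp x y Hx Hxy Hy. destruct (S_prop p Hp) as [H1 H2].
  apply (strict_decr (fun t => Cfun t p) (Cd p) (Sphi p) y); try lra.
  - intros c Hc. apply C_deriv. assert (sin (c-p) < 0) by (apply sinm_neg; lra). lra.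
  - intros c Hc. apply Cd_neg; lra.
Qed.

Lemma C_cont p c : PI/2 < p < PI -> 0 <= c < p -> continuity_pt (fun t => Cfun t p) c.
Proof. intros Hp Hc. apply (cont_of_deriv _ _ (Cd p c)). apply C_deriv.
  assert (sin (c-p) < 0) by (apply sinm_neg; lra). lra. Qed.

Lemma C_0 p : Cfun 0 p = 0.
Proof. unfold Cfun. unfold Rdiv. ring. Qed.

Lemma C_S p : PI/2 < p < PI -> Cfun (Sphi p) p = Mphi p.
Proof.
  intro Hp. destruct (Sphi_spec p Hp) as [H1 H2].
  assert (Hs : sin (Sphi p - p) < 0) by (apply sinm_neg; lra).
  replace (2 * Sphi p - 2 * p) with (2 * (Sphi p - p)) in H2 by ring. rewrite sin_2a in H2.
  unfold Mphi, Cfun. replace (Sphi p) with (sin (Sphi p - p) * cos (Sphi p - p)) at 1 by lra.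
  field. lra.
Qed.

Lemma C_le_M p t : PI/2 < p < PI -> 0 <= t < p -> Cfun t p <= Mphi p.
Proof.
  intros Hp Ht. destruct (S_prop p Hp) as [H1 H2]. rewrite <- C_S by auto.
  destruct (Rtotal_order t (Sphi p)) as [H|[H|H]].
  - left. apply C_incr; lra.
  - subst; lra.
  - left. apply C_decr; lra.
Qed.

Lemma C_pos p t : PI/2 < p < PI -> 0 < t <= Sphi p -> 0 < Cfun t p.
Proof. intros Hp Ht. rewrite <- (C_0 p). apply C_incr; lra. Qed.

Lemma M_pos p : PI/2 < p < PI -> 0 < Mphi p.
Proof. intros Hp. destruct (S_prop p Hp) as [H1 H2]. rewrite <- C_S by auto. apply C_pos; lra. Qed.


Lemma exp_le x y : x <= y -> exp x <= exp y.
Proof. intros [H|H]; [left; apply exp_increasing; auto| subst; lra]. Qed.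

Definition Rf (p t : R) := - t / sin (t - p).
Definition Gf (p t : R) := Rf p t * exp (- Cfun t p).

Definition Gd (p c : R) := exp (- Cfun c p) *
  ((sin (c-p) - c*cos (c-p))^2 + c^2 * sin (c-p)^2) / (- sin (c-p)^3).

Lemma G_deriv p c : sin (c-p) <> 0 -> derivable_pt_lim (Gf p) c (Gd p c).
Proof.
  intro Hs. apply is_derive_Reals. unfold Gf, Gd, Rf, Cfun. auto_derive.
  - unfold Rminus in Hs; auto.
  - unfold Rminus, Rdiv. field. unfold Rminus in Hs; auto.
Qed.

Lemma Gd_pos p c : PI/2 < p < PI -> 0 <= c < p -> 0 < Gd p c.
Proof.
  intros Hp Hc. assert (Hs : sin (c - p) < 0) by (apply sinm_neg; lra).
  unfold Gd. set (s := sin (c-p)) in *. set (co := cos (c-p)).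
  assert (0 < - s^3) by (replace (- s^3) with ((-s)*(s*s)) by ring; apply Rmult_lt_0_compat; nra).
  assert (0 < (s - c*co)^2 + c^2 * s^2).
  { destruct (Req_dec c 0) as [->|Hc0].
    - assert (0 < s * s) by nra. simpl. nra.
    - assert (0 < c * c) by (apply Rsqr_pos_lt in Hc0; unfold Rsqr in Hc0; lra).
      assert (0 < c*c*(s*s)) by (apply Rmult_lt_0_compat; nra).
      assert (0 <= (s - c*co)^2) by (apply pow2_ge_0). simpl in *. nra. }
  apply Rdiv_lt_0_compat; [|auto]. apply Rmult_lt_0_compat; [apply exp_pos|auto].
Qed.

Lemma G_incr p : PI/2 < p < PI -> forall x y, 0 <= x -> x < y -> y < p -> Gf p x < Gf p y.
Proof.
  intros Hp x y Hx Hxy Hy.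
  apply (strict_incr (Gf p) (Gd p) 0 y); try lra.
  - intros c Hc. apply G_deriv. assert (sin (c-p) < 0) by (apply sinm_neg; lra). lra.
  - intros c Hc. apply Gd_pos; lra.
Qed.

Lemma G_le p : PI/2 < p < PI -> forall x y, 0 <= x -> x <= y -> y < p -> Gf p x <= Gf p y.
Proof. intros Hp x y Hx Hxy Hy. destruct (Req_dec x y) as [->|]; [lra|]. left; apply G_incr; lra. Qed.

Lemma G_cont p c : PI/2 < p < PI -> 0 <= c < p -> continuity_pt (Gf p) c.
Proof. intros Hp Hc. apply (cont_of_deriv _ _ (Gd p c)). apply G_deriv.
  assert (sin (c-p) < 0) by (apply sinm_neg; lra). lra. Qed.

Lemma G_0 p : Gf p 0 = 0.
Proof. unfold Gf, Rf. unfold Rdiv. ring. Qed.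

Lemma G_small p e : PI/2 < p < PI -> 0 < e -> exists t, 0 < t <= Sphi p /\ Gf p t < e.
Proof.
  intros Hp He. destruct (S_prop p Hp) as [H1 H2].
  assert (Hc := G_cont p 0 Hp ltac:(lra)).
  destruct (Hc e He) as [al [Hal Hf]].
  set (t := Rmin (al/2) (Sphi p)).
  assert (0 < t) by (unfold t; apply Rmin_pos; lra).
  assert (t <= al/2) by apply Rmin_l. assert (t <= Sphi p) by apply Rmin_r.
  exists t. split; [lra|].
  assert (Hd := Hf t). simpl in Hd. unfold R_dist in Hd.
  rewrite G_0, Rminus_0_r, Rminus_0_r in Hd.
  specialize (Hd ltac:(split; [split; [exact I|lra] | rewrite Rabs_right; lra])).
  assert (Hle := Rle_abs (Gf p t)). lra.
Qed.

Lemma big p K : PI/2 < p < PI -> exists t, Sphi p < t < p /\ Cfun t p < - K /\ K < Gf p t.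
Proof.
  intros Hp. destruct (S_prop p Hp) as [H1 H2].
  assert (HPI := PI_RGT_0).
  set (m := Rmin (Rmin (p - Sphi p) (PI/3)) (p/2)).
  assert (Hm1 : m <= p - Sphi p) by (unfold m; eapply Rle_trans; [apply Rmin_l|apply Rmin_l]).
  assert (Hm2 : m <= PI/3) by (unfold m; eapply Rle_trans; [apply Rmin_l|apply Rmin_r]).
  assert (Hm3 : m <= p/2) by (unfold m; apply Rmin_r).
  assert (Hm0 : 0 < m) by (unfold m; repeat apply Rmin_pos; lra).
  set (v := m / (2 + 4 * Rabs K)).
  assert (HK := Rabs_pos K). assert (HK2 := Rle_abs K). assert (HK3 := Rle_abs (-K)). rewrite Rabs_Ropp in HK3.
  assert (Hv0 : 0 < v) by (unfold v; apply Rdiv_lt_0_compat; lra).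
  assert (Hv1 : v * (2 + 4 * Rabs K) = m) by (unfold v; field; lra).
  assert (Hv2 : v < m) by nra.
  exists (p - v). split; [lra|].
  assert (Hsv : 0 < sin v) by (apply sin_gt_0; lra).
  assert (Hsv2 : sin v < v) by (apply sin_lt_x; lra).
  assert (Hcv : 1/2 <= cos v).
  { rewrite <- cos_PI3. destruct (Req_dec v (PI/3)) as [->|]; [lra|].
    left. apply cos_decreasing_1; lra. }
  assert (Hcv1 := COS_bound v).
  assert (HC : (p - v) * cos v / - sin v < - K).
  { assert (E : (p - v) * cos v / - sin v = - ((p - v) * cos v / sin v)) by (field; lra).
    rewrite E. apply Ropp_lt_contravar.
    apply Rlt_le_trans with ((p/2) * (1/2) / v).
    - apply Rmult_lt_reg_r with v; auto. unfold Rdiv. rewrite Rmult_assoc, Rinv_l by lra.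
      nra.
    - unfold Rdiv. apply Rle_trans with ((p-v) * cos v * / v).
      + apply Rmult_le_compat_r. left; apply Rinv_0_lt_compat; lra. nra.
      + apply Rmult_le_compat_l. nra. apply Rinv_le_contravar; lra. }
  unfold Gf, Rf, Cfun. replace (p - v - p) with (- v) by ring. rewrite sin_neg, cos_neg.
  split; [exact HC|].
  assert (Ep : 0 < (p - v) * cos v / sin v) by (apply Rdiv_lt_0_compat; nra).
  assert (He : 1 <= exp (- ((p - v) * cos v / - sin v))).
  { rewrite <- exp_0. apply exp_le.
    assert (E : (p - v) * cos v / - sin v = - ((p - v) * cos v / sin v)) by (field; lra).
    lra. }
  assert (Hr : (p - v) * cos v / sin v <= - (p - v) / - sin v).
  { replace (- (p - v) / - sin v) with ((p - v) / sin v) by (field; lra).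
    unfold Rdiv. apply Rmult_le_compat_r. left; apply Rinv_0_lt_compat; lra. nra. }
  assert (E : (p - v) * cos v / - sin v = - ((p - v) * cos v / sin v)) by (field; lra).
  rewrite E in HC.
  assert (0 < - (p - v) / - sin v).
  { replace (- (p - v) / - sin v) with ((p - v) / sin v) by (field; lra). apply Rdiv_lt_0_compat; lra. }
  assert (- (p - v) / - sin v <= - (p - v) / - sin v * exp (- ((p - v) * cos v / - sin v))).
  { rewrite <- (Rmult_1_r (- (p - v) / - sin v)) at 1. apply Rmult_le_compat_l; lra. }
  lra.
Qed.


Lemma C1_spec p r : PI/2 < p < PI -> 0 <= r <= Mphi p ->
  0 <= C1inv r p <= Sphi p /\ Cfun (C1inv r p) p = r.
Proof.
  intros Hp Hr. destruct (S_prop p Hp) as [H1 H2].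
  unfold C1inv, choose. apply epsilon_spec.
  destruct (IVT_le (fun t => Cfun t p) 0 (Sphi p) r) as [z [Hz1 Hz2]]; try lra.
  - intros c Hc. apply C_cont; lra.
  - rewrite C_0; lra.
  - rewrite C_S; lra.
  - exists z; auto.
Qed.

Lemma C2_spec p r : PI/2 < p < PI -> r <= Mphi p ->
  Sphi p <= C2inv r p < p /\ Cfun (C2inv r p) p = r.
Proof.
  intros Hp Hr. destruct (S_prop p Hp) as [H1 H2].
  destruct (big p (-r) Hp) as [th [Ht1 [Ht2 _]]]. rewrite Ropp_involutive in Ht2.
  unfold C2inv, choose. apply epsilon_spec.
  destruct (IVT_le (fun t => - Cfun t p) (Sphi p) th (- r)) as [z [Hz1 Hz2]]; try lra.
  - intros c Hc. apply continuity_pt_opp. apply C_cont; lra.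
  - rewrite C_S; lra.
  - exists z. split; [lra|lra].
Qed.

Definition Aa (x y : R) := PI/2 - atan (x / y).

Lemma Aa_bound x y : 0 < Aa x y < PI.
Proof. unfold Aa. destruct (atan_bound (x/y)). lra. Qed.

Lemma sqrt_fact x y : 0 < y -> sqrt (x^2 + y^2) = y * sqrt (1 + (x/y)^2).
Proof.
  intro Hy. replace (x^2 + y^2) with ((y*y) * (1 + (x/y)^2)) by (field; lra).
  rewrite sqrt_mult. - rewrite sqrt_square; lra.
  - nra. - assert (0 <= (x/y)^2) by apply pow2_ge_0. lra.
Qed.

Lemma Aa_cs x y : 0 < y ->
  cos (Aa x y) = x / sqrt (x^2 + y^2) /\ sin (Aa x y) = y / sqrt (x^2 + y^2).
Proof.
  intro Hy. unfold Aa. rewrite cos_shift, sin_shift, sin_atan, cos_atan, sqrt_fact by auto.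
  assert (0 < sqrt (1 + (x/y)²)).
  { apply sqrt_lt_R0. assert (0 <= (x/y)²) by apply Rle_0_sqr. lra. }
  unfold Rsqr in *. replace ((x/y)^2) with (x/y*(x/y)) by ring.
  split; field; lra.
Qed.

Lemma angle_eq u a : cos u = cos a -> sin u = sin a -> exists k : Z, u = a + 2 * IZR k * PI.
Proof.
  intros Hc Hs.
  assert (H1 : cos (u - a) = 1).
  { rewrite cos_minus, Hc, Hs. assert (H := sin2_cos2 a). unfold Rsqr in H. lra. }
  replace (u - a) with (2 * ((u - a)/2)) in H1 by field. rewrite cos_2a_sin in H1.
  assert (H2 : sin ((u-a)/2) = 0) by nra.
  destruct (sin_eq_0_0 _ H2) as [k Hk]. exists k. lra.
Qed.

Lemma sol_angle p x t rho : PI/2 < p < PI -> 0 < rho ->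
  x = rho * cos (p - t) -> t = rho * sin (p - t) ->
  0 < Rabs t /\ rho = sqrt (x^2 + (Rabs t)^2) /\ p <= Rabs t + Aa x (Rabs t).
Proof.
  intros Hp Hr Hx Ht.
  assert (HPI := PI_RGT_0).
  assert (Hrho : rho = sqrt (x^2 + t^2)).
  { assert (H := sin2_cos2 (p - t)). unfold Rsqr in H.
    assert (E : x^2 + t^2 = rho * rho).
    { set (c := cos (p - t)) in *. set (s := sin (p - t)) in *.
      rewrite Hx. pattern t at 1. rewrite Ht.
      replace ((rho * c)^2 + (rho * s)^2) with (rho * rho * (s*s + c*c)) by ring.
      rewrite H; ring. }
    rewrite E, sqrt_square; lra. }
  assert (Ht0 : t <> 0).
  { intro E. rewrite E in Ht. rewrite Rminus_0_r in Ht.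
    assert (0 < sin p) by (apply sin_gt_0; lra). nra. }
  assert (Hsq : (Rabs t)^2 = t^2) by (rewrite <- Rsqr_pow2, <- Rsqr_pow2; apply Rsqr_abs || (unfold Rsqr; rewrite <- Rabs_mult, Rabs_right; nra)).
  split; [apply Rabs_pos_lt; auto|]. rewrite Hsq. split; [auto|].
  assert (Hsq0 : 0 < sqrt (x^2 + t^2)) by (rewrite <- Hrho; auto).
  destruct (Rlt_le_dec 0 t) as [Htp|Htn].
  - rewrite Rabs_right by lra.
    destruct (Aa_cs x t Htp) as [Hc Hs].
    destruct (angle_eq (p - t) (Aa x t)) as [k Hk].
    + rewrite Hc, <- Hrho. field_simplify_eq; [|lra]. lra.
    + rewrite Hs, <- Hrho. field_simplify_eq; [|lra]. lra.
    + destruct (Aa_bound x t).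
      assert (IZR k < 1).
      { assert (2 * IZR k * PI < PI) by lra.
        assert (IZR k * PI < PI) by (destruct (Rle_lt_dec (IZR k) 0); nra).
        apply Rmult_lt_reg_r with PI; lra. }
      apply lt_IZR in H1. assert (IZR k <= 0) by (apply IZR_le; lia). nra.
  - assert (Htn' : t < 0) by lra. rewrite Rabs_left by lra.
    assert (Hpos : 0 < - t) by lra.
    destruct (Aa_cs x (-t) Hpos) as [Hc Hs].
    replace ((-t)^2) with (t^2) in Hc, Hs by ring.
    destruct (angle_eq (t - p) (Aa x (-t))) as [k Hk].
    + rewrite Hc, <- Hrho. replace (t - p) with (- (p - t)) by ring. rewrite cos_neg.
      field_simplify_eq; [|lra]. lra.
    + rewrite Hs, <- Hrho. replace (t - p) with (- (p - t)) by ring. rewrite sin_neg.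
      field_simplify_eq; [|lra]. lra.
    + destruct (Aa_bound x (-t)).
      assert (IZR k < 0).
      { assert (2 * IZR k * PI < 0) by lra.
        destruct (Rle_lt_dec 0 (IZR k)); [nra|lra]. }
      apply lt_IZR in H1. assert (IZR k <= -1) by (apply IZR_le; lia). nra.
Qed.


Lemma main_pt p x tj : PI/2 < p < PI -> 0 < tj < p -> Cfun tj p = - x ->
  Aa x tj = p - tj /\ Rf p tj = sqrt (x^2 + tj^2) /\ Gf p tj = Rf p tj * exp x.
Proof.
  intros Hp Ht HC.
  assert (Hs : sin (tj - p) < 0) by (apply sinm_neg; lra).
  assert (HPI := PI_RGT_0).
  unfold Cfun in HC.
  split; [|split].
  - set (v := p - tj).
    assert (Hsv : 0 < sin v) by (unfold v; apply sin_gt_0; lra).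
    assert (Ex : x / tj = tan (PI/2 - v)).
    { unfold tan. rewrite sin_shift, cos_shift.
      unfold v. replace (tj - p) with (- (p - tj)) in HC by ring.
      rewrite sin_neg, cos_neg in HC.
      apply Rmult_eq_reg_r with tj; [|lra].
      replace (x / tj * tj) with x by (field; lra).
      assert (x = tj * cos (p - tj) / sin (p-tj)) by (rewrite <- (Ropp_involutive x), <- HC; field; fold v; lra).
      rewrite H. field. fold v; lra. }
    unfold Aa. rewrite Ex, atan_tan by (unfold v; lra). ring.
  - assert (Rf p tj * Rf p tj = x^2 + tj^2).
    { unfold Rf. assert (H := sin2_cos2 (tj - p)). unfold Rsqr in H.
      assert (x = - (tj * cos (tj - p) / sin (tj - p))) by lra.
      rewrite H0. field_simplify_eq; [|lra].
      replace (tj^2 * sin (tj - p)^2 + tj^2 * cos (tj-p)^2) with (tj^2 * (sin (tj - p) * sin (tj - p) + cos (tj - p) * cos (tj - p))) by ring.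
      rewrite H. ring. }
    rewrite <- H, sqrt_square; [auto|].
    unfold Rf. left. replace (-tj / sin(tj-p)) with (tj / (- sin(tj-p))) by (field; lra); apply Rdiv_lt_0_compat; lra.
  - unfold Gf. unfold Cfun. rewrite HC, Ropp_involutive. auto.
Qed.

Lemma h_deriv x c : 0 < c -> derivable_pt_lim (fun y => y + Aa x y) c (1 + x / (c^2 + x^2)).
Proof.
  intro Hc. apply is_derive_Reals. unfold Aa. auto_derive.
  - apply Rgt_not_eq; lra.
  - assert (0 < c*c) by nra. assert (0 <= x*x) by nra.
    assert (0 < c*c + x*x) by nra.
    replace (1 + x * / c * (x * / c * 1)) with ((c*c + x*x)/(c*c)) by (field; lra).
    field. split; lra.
Qed.

Lemma h_convex x y1 y y2 p : x < 0 -> 0 < y1 -> y1 < y -> y < y2 ->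
  y1 + Aa x y1 <= p -> y2 + Aa x y2 <= p -> y + Aa x y < p.
Proof.
  intros Hx H1 H2 H3 Hh1 Hh2.
  destruct (Rlt_le_dec (y + Aa x y) p) as [|Hc]; [auto|exfalso].
  destruct (MVT_cor2 (fun y => y + Aa x y) (fun c => 1 + x / (c^2 + x^2)) y1 y H2) as [c1 [Hc1 Hc1']].
  { intros c Hcc. apply h_deriv; lra. }
  destruct (MVT_cor2 (fun y => y + Aa x y) (fun c => 1 + x / (c^2 + x^2)) y y2 H3) as [c2 [Hc2 Hc2']].
  { intros c Hcc. apply h_deriv; lra. }
  assert (D1 : 0 <= 1 + x / (c1^2 + x^2)).
  { destruct (Rlt_le_dec (1 + x / (c1^2 + x^2)) 0) as [N|]; [|auto]. nra. }
  assert (D2 : 1 + x / (c2^2 + x^2) <= 0).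
  { destruct (Rlt_le_dec 0 (1 + x / (c2^2 + x^2))) as [N|]; [|auto]. nra. }
  assert (x / (c1^2 + x^2) < x / (c2^2 + x^2)).
  { assert (0 < c1^2 + x^2) by nra. assert (0 < c2^2 + x^2) by nra.
    assert (c1^2 < c2^2) by nra.
    apply Rminus_gt_0_lt.
    replace (x / (c2 ^ 2 + x ^ 2) - x / (c1 ^ 2 + x ^ 2)) with
       ((- x) * (c2^2 - c1^2) / ((c1^2 + x^2) * (c2^2 + x^2))) by (field; lra).
    apply Rdiv_lt_0_compat; nra. }
  lra.
Qed.


Definition Sys p b r X t := X + b = r * exp (-X) * cos (p - t) /\ t = r * exp (-X) * sin (p - t).
Definition Cond p b r := (0 <= b /\ r < Rfun2 (-b) p) \/
  (- Mphi p < b < 0 /\ Rfun1 (-b) p < r < Rfun2 (-b) p).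

Lemma atan_le a c : a <= c -> atan a <= atan c.
Proof. intros [H|H]; [left; apply atan_increasing; auto| subst; lra]. Qed.

Lemma upper p b x X y r : PI/2 < p < PI -> - b <= Mphi p -> b <= x -> X = x - b -> 0 < y ->
  C2inv (-x) p <= y -> r = sqrt (x^2 + y^2) * exp X -> Rfun2 (-b) p <= r.
Proof.
  intros Hp Hb Hbx HX Hy Hty Hr. destruct (S_prop p Hp) as [HS1 HS2].
  destruct (C2_spec p (-x) Hp ltac:(lra)) as [H2a H2b].
  set (t2 := C2inv (-x) p) in *.
  destruct (main_pt p x t2 Hp ltac:(lra) H2b) as [_ [R2 G2]].
  destruct (C2_spec p (-b) Hp Hb) as [H3a H3b].
  set (t3 := C2inv (-b) p) in *.
  destruct (main_pt p b t3 Hp ltac:(lra) H3b) as [_ [R3 G3]].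
  assert (Hle : t3 <= t2).
  { destruct (Rle_lt_dec t3 t2) as [|N]; [auto|].
    assert (Cfun t3 p < Cfun t2 p) by (apply C_decr; lra). lra. }
  assert (HG := G_le p Hp t3 t2 ltac:(lra) Hle ltac:(lra)).
  change (Rfun2 (-b) p) with (Rf p t3).
  assert (Hsq : sqrt (x^2 + t2^2) <= sqrt (x^2 + y^2)) by (apply sqrt_le_1_alt; nra).
  assert (E3 : Rf p t3 = Gf p t3 * exp (-b)).
  { rewrite G3, Rmult_assoc, <- exp_plus. replace (b + - b) with 0 by ring. rewrite exp_0; ring. }
  assert (E2 : Gf p t2 * exp (-b) = Rf p t2 * exp X).
  { rewrite G2, Rmult_assoc, <- exp_plus, HX. replace (x + - b) with (x - b) by ring. reflexivity. }
  rewrite E3, Hr. apply Rle_trans with (Gf p t2 * exp (-b)).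
  - apply Rmult_le_compat_r; [left; apply exp_pos|auto].
  - rewrite E2, R2. apply Rmult_le_compat_r; [left; apply exp_pos|auto].
Qed.

Lemma lower p b x X y r : PI/2 < p < PI -> - b < Mphi p -> b <= x -> x < 0 -> X = x - b -> 0 < y ->
  y <= C1inv (-x) p -> r = sqrt (x^2 + y^2) * exp X -> r <= Rfun1 (-b) p.
Proof.
  intros Hp Hb Hbx Hx0 HX Hy Hty Hr. destruct (S_prop p Hp) as [HS1 HS2].
  destruct (C1_spec p (-x) Hp ltac:(lra)) as [H2a H2b].
  set (t2 := C1inv (-x) p) in *.
  assert (Ht2 : 0 < t2).
  { destruct (Req_dec t2 0) as [E|]; [|lra]. rewrite E, C_0 in H2b. lra. }
  destruct (main_pt p x t2 Hp ltac:(lra) H2b) as [_ [R2 G2]].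
  destruct (C1_spec p (-b) Hp ltac:(lra)) as [H3a H3b].
  set (t3 := C1inv (-b) p) in *.
  assert (Ht3 : 0 < t3).
  { destruct (Req_dec t3 0) as [E|]; [|lra]. rewrite E, C_0 in H3b. lra. }
  destruct (main_pt p b t3 Hp ltac:(lra) H3b) as [_ [R3 G3]].
  assert (Hle : t2 <= t3).
  { destruct (Rle_lt_dec t2 t3) as [|N]; [auto|].
    assert (Cfun t3 p < Cfun t2 p) by (apply C_incr; lra). lra. }
  assert (HG := G_le p Hp t2 t3 ltac:(lra) Hle ltac:(lra)).
  change (Rfun1 (-b) p) with (Rf p t3).
  assert (Hsq : sqrt (x^2 + y^2) <= sqrt (x^2 + t2^2)) by (apply sqrt_le_1_alt; nra).
  assert (E3 : Rf p t3 = Gf p t3 * exp (-b)).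
  { rewrite G3, Rmult_assoc, <- exp_plus. replace (b + - b) with 0 by ring. rewrite exp_0; ring. }
  assert (E2 : Gf p t2 * exp (-b) = Rf p t2 * exp X).
  { rewrite G2, Rmult_assoc, <- exp_plus, HX. replace (x + - b) with (x - b) by ring. reflexivity. }
  rewrite E3, Hr. apply Rle_trans with (Gf p t2 * exp (-b)).
  - rewrite E2, R2. apply Rmult_le_compat_r; [left; apply exp_pos|auto].
  - apply Rmult_le_compat_r; [left; apply exp_pos|auto].
Qed.

Theorem real_stable p b r X t : PI/2 < p < PI -> 0 < r -> Cond p b r -> Sys p b r X t -> X < 0.
Proof.
  intros Hp Hr HC [Hx Ht].
  destruct (Rlt_le_dec X 0) as [|HX]; [auto|exfalso].
  destruct (S_prop p Hp) as [HS1 HS2].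
  assert (HM := M_pos p Hp).
  set (rho := r * exp (-X)) in *.
  assert (Hrho0 : 0 < rho) by (unfold rho; apply Rmult_lt_0_compat; [auto|apply exp_pos]).
  set (x := X + b) in *.
  destruct (sol_angle p x t rho Hp Hrho0 Hx Ht) as [Hy [Hrho Hang]].
  set (y := Rabs t) in *.
  assert (Hr' : r = sqrt (x^2 + y^2) * exp X).
  { rewrite <- Hrho. unfold rho. rewrite Rmult_assoc, <- exp_plus.
    replace (-X + X) with 0 by ring. rewrite exp_0; ring. }
  assert (HXe : X = x - b) by (unfold x; ring).
  assert (Hbx : b <= x) by (unfold x; lra).
  assert (Hbm : - b <= Mphi p) by (destruct HC as [[? ?]|[? ?]]; lra).
  assert (Hupper : C2inv (-x) p <= y -> False).
  { intro H. assert (Rfun2 (-b) p <= r) by (apply (upper p b x X y r Hp); auto).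
    destruct HC as [[? ?]|[? ?]]; lra. }
  destruct (C2_spec p (-x) Hp ltac:(lra)) as [H2a H2b].
  destruct (main_pt p x (C2inv (-x) p) Hp ltac:(lra) H2b) as [A2 _].
  destruct (Rle_lt_dec 0 x) as [Hx0|Hx0].
  - apply Hupper. destruct (Rle_lt_dec (C2inv (-x) p) y) as [|N]; [auto|exfalso].
    assert (atan (x / C2inv (-x) p) <= atan (x / y)).
    { apply atan_le. unfold Rdiv. apply Rmult_le_compat_l; [auto|].
      left; apply Rinv_lt_contravar; [nra|auto]. }
    unfold Aa in A2, Hang. lra.
  - destruct HC as [[Hb0 _]|[Hb [H1 H2]]]; [lra|].
    destruct (C1_spec p (-x) Hp ltac:(lra)) as [H1a H1b].
    assert (Ht1 : 0 < C1inv (-x) p).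
    { destruct (Req_dec (C1inv (-x) p) 0) as [E|]; [|lra]. rewrite E, C_0 in H1b. lra. }
    destruct (main_pt p x (C1inv (-x) p) Hp ltac:(lra) H1b) as [A1 _].
    destruct (Rle_lt_dec (C2inv (-x) p) y) as [Hy2|Hy2]; [apply Hupper; auto|].
    destruct (Rle_lt_dec y (C1inv (-x) p)) as [Hy1|Hy1].
    + assert (r <= Rfun1 (-b) p) by (apply (lower p b x X y r Hp); auto; lra). lra.
    + assert (y + Aa x y < p).
      { apply (h_convex x (C1inv (-x) p) y (C2inv (-x) p) p); try lra. }
      lra.
Qed.

Lemma mk_sol p b r t : PI/2 < p < PI -> 0 <= t < p -> Gf p t = r * exp b -> Cfun t p <= - b ->
  0 <= - b - Cfun t p /\ Sys p b r (- b - Cfun t p) t.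
Proof.
  intros Hp Ht HG HC. split; [lra|].
  assert (Hs : sin (t - p) < 0) by (apply sinm_neg; lra).
  assert (E : r * exp (- (- b - Cfun t p)) = Rf p t).
  { replace (- (- b - Cfun t p)) with (b + Cfun t p) by ring. rewrite exp_plus, <- Rmult_assoc, <- HG.
    unfold Gf. rewrite Rmult_assoc, <- exp_plus. replace (- Cfun t p + Cfun t p) with 0 by ring.
    rewrite exp_0; ring. }
  unfold Sys. rewrite E. unfold Rf, Cfun.
  replace (p - t) with (- (t - p)) by ring. rewrite cos_neg, sin_neg.
  split; field; lra.
Qed.

Lemma IVT_G p lo hi v : PI/2 < p < PI -> 0 <= lo <= hi -> hi < p -> Gf p lo <= v <= Gf p hi ->
  exists t, lo <= t <= hi /\ Gf p t = v.
Proof.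
  intros Hp Hl Hh Hv. apply IVT_le; try lra.
  intros c Hc. apply G_cont; lra.
Qed.

Theorem real_unstable p b r : PI/2 < p < PI -> 0 < r -> ~ Cond p b r ->
  exists X t, 0 <= X /\ Sys p b r X t.
Proof.
  intros Hp Hr HC.
  destruct (S_prop p Hp) as [HS1 HS2].
  assert (HM := M_pos p Hp).
  assert (Hv : 0 < r * exp b) by (apply Rmult_lt_0_compat; [auto|apply exp_pos]).
  destruct (Rle_lt_dec b (- Mphi p)) as [Hb|Hb].
  - destruct (G_small p _ Hp Hv) as [t1 [Ht1 HG1]].
    destruct (big p (r * exp b) Hp) as [t2 [Ht2 [_ HG2]]].
    destruct (IVT_G p t1 t2 (r * exp b) Hp ltac:(lra) ltac:(lra) ltac:(lra)) as [t [Ht HG]].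
    assert (Cfun t p <= Mphi p) by (apply C_le_M; lra).
    exists (- b - Cfun t p), t. apply mk_sol; auto; lra.
  - destruct (Rle_lt_dec (Rfun2 (-b) p) r) as [Hr2|Hr2].
    + destruct (C2_spec p (-b) Hp ltac:(lra)) as [H3a H3b].
      destruct (main_pt p b (C2inv (-b) p) Hp ltac:(lra) H3b) as [_ [_ G3]].
      change (Rfun2 (-b) p) with (Rf p (C2inv (-b) p)) in Hr2.
      destruct (big p (r * exp b) Hp) as [th [Hth [_ HGh]]].
      assert (HGl : Gf p (C2inv (-b) p) <= r * exp b).
      { rewrite G3. apply Rmult_le_compat_r; [left; apply exp_pos|auto]. }
      assert (C2inv (-b) p <= th).
      { destruct (Rle_lt_dec (C2inv (-b) p) th) as [|N]; [auto|].
        assert (Gf p th < Gf p (C2inv (-b) p)) by (apply G_incr; lra). lra. }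
      destruct (IVT_G p (C2inv (-b) p) th (r * exp b) Hp ltac:(lra) ltac:(lra) ltac:(lra)) as [t [Ht HG]].
      assert (Cfun t p <= - b).
      { destruct (Req_dec t (C2inv (-b) p)) as [E|NE]; [rewrite E; lra|].
        assert (Cfun t p < Cfun (C2inv (-b) p) p) by (apply C_decr; lra). lra. }
      exists (- b - Cfun t p), t. apply mk_sol; auto; lra.
    + destruct (Rle_lt_dec 0 b) as [Hb0|Hb0]; [exfalso; apply HC; left; auto|].
      destruct (Rlt_le_dec (Rfun1 (-b) p) r) as [Hr1|Hr1]; [exfalso; apply HC; right; auto|].
      destruct (C1_spec p (-b) Hp ltac:(lra)) as [H3a H3b].
      assert (Ht3 : 0 < C1inv (-b) p).
      { destruct (Req_dec (C1inv (-b) p) 0) as [E|]; [|lra]. rewrite E, C_0 in H3b. lra. }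
      destruct (main_pt p b (C1inv (-b) p) Hp ltac:(lra) H3b) as [_ [_ G3]].
      change (Rfun1 (-b) p) with (Rf p (C1inv (-b) p)) in Hr1.
      destruct (G_small p _ Hp Hv) as [tl [Htl HGl]].
      assert (HGh : r * exp b <= Gf p (C1inv (-b) p)).
      { rewrite G3. apply Rmult_le_compat_r; [left; apply exp_pos|auto]. }
      assert (tl <= C1inv (-b) p).
      { destruct (Rle_lt_dec tl (C1inv (-b) p)) as [|N]; [auto|].
        assert (Gf p (C1inv (-b) p) < Gf p tl) by (apply G_incr; lra). lra. }
      destruct (IVT_G p tl (C1inv (-b) p) (r * exp b) Hp ltac:(lra) ltac:(lra) ltac:(lra)) as [t [Ht HG]].
      assert (Cfun t p <= - b).
      { destruct (Req_dec t (C1inv (-b) p)) as [E|NE]; [rewrite E; lra|].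
        assert (Cfun t p < Cfun (C1inv (-b) p) p) by (apply C_incr; lra). lra. }
      exists (- b - Cfun t p), t. apply mk_sol; auto; lra.
Qed.


Lemma trig_sigma sg ph th : (sg = 1 \/ sg = -1) ->
  cos (ph - sg * th) = cos ph * cos th + sg * (sin ph * sin th) /\
  sin (ph - sg * th) = sin ph * cos th - sg * (cos ph * sin th).
Proof.
  intros [-> | ->].
  - rewrite Rmult_1_l, cos_minus, sin_minus. split; ring.
  - replace (ph - -1 * th) with (ph + th) by ring. rewrite cos_plus, sin_plus. split; ring.
Qed.

Lemma root_sys (a tau m ph sg : R) (w z : C) :
  0 < tau -> (sg = 1 \/ sg = -1) -> fst w = m * cos ph -> snd w = sg * (m * sin ph) ->
  (Cplus (Cplus z (RtoC a)) (Copp (Cmult w (Cexp (Cmult (RtoC (- tau)) z)))) = RtoC 0 <->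
   Sys ph (tau * a) (tau * m) (tau * fst z) (sg * (tau * snd z))).
Proof.
  intros Ht Hsg Hwx Hwy. destruct z as [zx zy]. destruct w as [wx wy]. simpl in Hwx, Hwy |- *.
  unfold Cplus, Copp, Cmult, Cexp, RtoC, Re, Im. simpl.
  replace (- tau * zx - 0 * zy) with (- (tau * zx)) by ring.
  replace (- tau * zy + 0 * zx) with (- (tau * zy)) by ring.
  rewrite cos_neg, sin_neg.
  destruct (trig_sigma sg ph (tau * zy) Hsg) as [Hc Hs].
  unfold Sys.
  rewrite Hc, Hs, Hwx, Hwy.
  set (e := exp (- (tau * zx))). set (c := cos ph). set (s := sin ph).
  set (C1 := cos (tau * zy)). set (S1 := sin (tau * zy)).
  destruct Hsg as [Hsg|Hsg]; subst sg; split.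
  - intro H. injection H as H1 H2. split.
    + assert (E : zx + a = m * c * (e * C1) - 1 * (m * s) * (e * - S1)) by lra.
      replace (tau * zx + tau * a) with (tau * (zx + a)) by ring. rewrite E. ring.
    + assert (E : zy = m * c * (e * - S1) + 1 * (m * s) * (e * C1)) by lra.
      rewrite E. ring.
  - intros [H1 H2]. f_equal.
    + apply Rmult_eq_reg_l with tau; [|lra]. ring_simplify. ring_simplify in H1. lra.
    + apply Rmult_eq_reg_l with tau; [|lra]. ring_simplify. ring_simplify in H2. lra.
  - intro H. injection H as H1 H2. split.
    + assert (E : zx + a = m * c * (e * C1) - -1 * (m * s) * (e * - S1)) by lra.
      replace (tau * zx + tau * a) with (tau * (zx + a)) by ring. rewrite E. ring.
    + assert (E : zy = m * c * (e * - S1) + -1 * (m * s) * (e * C1)) by lra.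
      rewrite E. ring.
  - intros [H1 H2]. f_equal.
    + apply Rmult_eq_reg_l with tau; [|lra]. ring_simplify. ring_simplify in H1. lra.
    + apply Rmult_eq_reg_l with tau; [|lra]. ring_simplify. ring_simplify in H2. lra.
Qed.


Lemma w_polar (w : C) : Im w <> 0 ->
  exists sg, (sg = 1 \/ sg = -1) /\ 0 < Cmod w /\
    fst w = Cmod w * cos (Rabs (Arg w)) /\ snd w = sg * (Cmod w * sin (Rabs (Arg w))).
Proof.
  intro Hw. destruct w as [wx wy]. unfold Im in Hw; simpl in Hw.
  assert (Hm : 0 < Cmod (wx, wy)).
  { unfold Cmod; simpl. apply sqrt_lt_R0. assert (0 < wy^2) by (apply pow2_gt_0; auto).
    assert (0 <= wx^2) by apply pow2_ge_0. lra. }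
  set (m := Cmod (wx, wy)) in *.
  assert (Hm2 : m * m = wx^2 + wy^2) by (unfold m, Cmod; simpl; apply sqrt_sqrt; nra).
  assert (Hq : -1 <= wx / m <= 1).
  { split.
    - apply Rmult_le_reg_r with m; auto. field_simplify; [|lra]. nra.
    - apply Rmult_le_reg_r with m; auto. field_simplify; [|lra]. nra. }
  assert (HA : Rabs (Arg (wx, wy)) = acos (wx / m)).
  { unfold Arg, Re, Im; simpl. fold m. destruct (acos_bound (wx/m)).
    destruct (Rlt_dec wy 0). - rewrite Rabs_Ropp, Rabs_right; lra. - rewrite Rabs_right; lra. }
  rewrite HA. rewrite cos_acos, sin_acos by auto.
  assert (Hs : sqrt (1 - (wx/m)²) = Rabs wy / m).
  { replace (1 - (wx/m)²) with ((Rabs wy / m)²).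
    - apply sqrt_Rsqr. apply Rdiv_le_0_compat; [apply Rabs_pos|auto].
    - unfold Rsqr. replace (Rabs wy / m * (Rabs wy / m)) with ((Rabs wy * Rabs wy)/(m*m)) by (field; lra).
      rewrite <- Rabs_mult, Rabs_right by nra.
      replace (1 - wx / m * (wx / m)) with ((m*m - wx*wx)/(m*m)) by (field; lra).
      rewrite Hm2. field.
      assert (0 < wy^2) by (apply pow2_gt_0; auto). assert (0 <= wx^2) by apply pow2_ge_0. lra. }
  rewrite Hs. simpl.
  destruct (Rlt_dec wy 0) as [Hn|Hn].
  - exists (-1). split; [right; auto|]. split; [auto|]. split; [field; lra|].
    rewrite Rabs_left by auto. field. lra.
  - exists 1. split; [left; auto|]. split; [auto|]. split; [field; lra|].
    rewrite Rabs_right by lra. field. lra.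
Qed.

Theorem mainTheorem16 (a : R) (w : C) (tau : R) :
  Im w <> 0 ->
  PI / 2 < Rabs (Arg w) < PI ->
  0 < tau ->
  let phi := Rabs (Arg w) in
  (forall z : C,
      Cplus (Cplus z (RtoC a)) (Copp (Cmult w (Cexp (Cmult (RtoC (- tau)) z)))) = RtoC 0 ->
      Re z < 0)
  <->
  ((0 <= a /\ Cmod w < / tau * Rfun2 (- tau * a) phi) \/
   (- / tau * Mphi phi < a < 0 /\
    / tau * Rfun1 (- tau * a) phi < Cmod w < / tau * Rfun2 (- tau * a) phi)).
Proof.
  intros Hw Hp Ht phi.
  destruct (w_polar w Hw) as [sg [Hsg [Hm [Hwx Hwy]]]].
  fold phi in Hp, Hwx, Hwy.
  set (m := Cmod w) in *.
  replace (- tau * a) with (- (tau * a)) by ring.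
  assert (HCe : Cond phi (tau * a) (tau * m) <->
    ((0 <= a /\ m < / tau * Rfun2 (- (tau * a)) phi) \/
     (- / tau * Mphi phi < a < 0 /\
      / tau * Rfun1 (- (tau * a)) phi < m < / tau * Rfun2 (- (tau * a)) phi))).
  { unfold Cond.
    assert (E1 : forall u v, u < tau * v <-> / tau * u < v).
    { intros u v. split; intro H.
      - apply Rmult_lt_reg_l with tau; auto. field_simplify; lra.
      - apply Rmult_lt_reg_l with (/ tau); [apply Rinv_0_lt_compat; auto|]. field_simplify; lra. }
    assert (E2 : forall u v, tau * v < u <-> v < / tau * u).
    { intros u v. split; intro H.
      - apply Rmult_lt_reg_l with tau; auto. field_simplify; lra.
      - apply Rmult_lt_reg_l with (/ tau); [apply Rinv_0_lt_compat; auto|]. field_simplify; lra. }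
    assert (E3 : 0 <= tau * a <-> 0 <= a).
    { split; intro H. - destruct (Rle_lt_dec 0 a); [auto|nra]. - nra. }
    assert (E4 : tau * a < 0 <-> a < 0).
    { split; intro H. - destruct (Rlt_le_dec a 0); [auto|nra]. - nra. }
    assert (E5 : - Mphi phi < tau * a <-> - / tau * Mphi phi < a).
    { replace (- / tau * Mphi phi) with (/ tau * (- Mphi phi)) by ring. apply E1. }
    rewrite E3, E4, E5. repeat rewrite E1. repeat rewrite E2. tauto. }
  assert (Hroot := fun z => root_sys a tau m phi sg w z Ht Hsg Hwx Hwy).
  rewrite <- HCe. split.
  - intro Hst. apply NNPP. intro Hn.
    destruct (real_unstable phi (tau * a) (tau * m) Hp ltac:(nra) Hn) as [X [t [HX HS]]].
    set (z := (X / tau, sg * t / tau) : C).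
    assert (Hz : Sys phi (tau * a) (tau * m) (tau * fst z) (sg * (tau * snd z))).
    { unfold z; simpl.
      replace (tau * (X / tau)) with X by (field; lra).
      replace (sg * (tau * (sg * t / tau))) with ((sg * sg) * t) by (field; lra).
      replace (sg * sg) with 1 by (destruct Hsg as [-> | ->]; ring). rewrite Rmult_1_l. auto. }
    apply Hroot in Hz. apply Hst in Hz. unfold z, Re in Hz; simpl in Hz.
    assert (0 <= X / tau) by (apply Rdiv_le_0_compat; lra). lra.
  - intros HC z Hz. apply Hroot in Hz.
    assert (H := real_stable phi (tau * a) (tau * m) _ _ Hp ltac:(nra) HC Hz).
    unfold Re. destruct (Rlt_le_dec (fst z) 0); [auto|nra].
Qed.
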